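(* Let $\mathscr{M}_n$ be the monoid of $n\times n$ Boolean matrices with at least one $1$ in every row and every column, under Boolean matrix multiplication. For all $\alpha,\beta\in\mathscr{M}_n$, with Green's relations taken in $\mathscr{M}_n$: (1) $\alpha\,\mathcal{L}\,\beta$ iff $\langle R(\alpha)\rangle=\langle R(\beta)\rangle$; (2) $\alpha\,\mathcal{R}\,\beta$ iff $\langle C(\alpha)\rangle=\langle C(\beta)\rangle$; (3) $\alpha\,\mathcal{H}\,\beta$ iff $\langle R(\alpha)\rangle=\langle R(\beta)\rangle$ and $\langle C(\alpha)\rangle=\langle C(\beta)\rangle$.
   Context: Boolean arithmetic uses $1+1=1$; rows and columns are vectors in $\{0,1\}^n$, added coordinatewise in this arithmetic and compared coordinatewise ($u\le v$ iff $u_i=1$ implies $v_i=1$). $\mathscr{M}_n$ is isomorphic to the monoid of multipermutations on $[n]$ (binary relations in which every element has a successor and a predecessor) under composition of relations. For $\alpha\in\mathscr{M}_n$: $R(\alpha)$ is the set of rows and $C(\alpha)$ the set of columns of $\alpha$; the row space $V(\alpha)$ is the set of all Boolean sums of rows of $\alpha$ together with the zero vector, and the column space $W(\alpha)$ likewise for columns. $\langle R(\alpha)\rangle=\{\rho\in V(\alpha)\setminus\{0\}:\rho\le\alpha_j\text{ for some row }\alpha_j\text{ of }\alpha\}$ and $\langle C(\alpha)\rangle=\{\kappa\in W(\alpha)\setminus\{0\}:\kappa\le\gamma\text{ for some column }\gamma\text{ of }\alpha\}$. *)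

(* Defs.v *)
From mathcomp Require Import all_boot all_order all_algebra.
Set Implicit Arguments. Unset Strict Implicit. Unset Printing Implicit Defensive.

Definition bmx (n : nat) := 'M[bool]_n.

Definition bmul n (A B : bmx n) : bmx n :=
  (\matrix_(i < n, j < n) [exists k : 'I_n, A i k && B k j])%R.

Definition inMn n (A : bmx n) : bool :=
  [forall i : 'I_n, exists j : 'I_n, A i j] &&
  [forall j : 'I_n, exists i : 'I_n, A i j].

(* Green's relations taken in the monoid M_n (a monoid, so S^1 = S). *)
Definition greenL n (A B : bmx n) : Prop :=
  (exists2 G : bmx n, inMn G & A = bmul G B) /\
  (exists2 D : bmx n, inMn D & B = bmul D A).
Definition greenR n (A B : bmx n) : Prop :=
  (exists2 G : bmx n, inMn G & A = bmul B G) /\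
  (exists2 D : bmx n, inMn D & B = bmul A D).
Definition greenH n (A B : bmx n) : Prop := greenL A B /\ greenR A B.

(* A Boolean vector in {0,1}^n is identified with its support {set 'I_n};
   Boolean sum = union, coordinatewise order = inclusion, zero = set0. *)
Definition brow n (A : bmx n) (i : 'I_n) : {set 'I_n} := [set j | A i j].
Definition bcol n (A : bmx n) (j : 'I_n) : {set 'I_n} := [set i | A i j].

(* Row space V(A): all Boolean sums of rows, together with zero
   (the empty sum gives zero). *)
Definition rowspace n (A : bmx n) : {set {set 'I_n}} :=
  [set \bigcup_(i in S) brow A i | S : {set 'I_n}].
Definition colspace n (A : bmx n) : {set {set 'I_n}} :=
  [set \bigcup_(j in S) bcol A j | S : {set 'I_n}].

Definition genR n (A : bmx n) : {set {set 'I_n}} :=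
  [set v in rowspace A | (v != set0) && [exists i : 'I_n, v \subset brow A i]].
Definition genC n (A : bmx n) : {set {set 'I_n}} :=
  [set v in colspace A | (v != set0) && [exists j : 'I_n, v \subset bcol A j]].

(* Main.v *)
Require Import Defs.
From mathcomp Require Import all_boot all_order all_algebra.
From Stdlib Require Import FunctionalExtensionality.
Set Implicit Arguments. Unset Strict Implicit. Unset Printing Implicit Defensive.

Local Open Scope ring_scope.
Section S.
Variable n : nat.
Implicit Types A B G D X Y : 'M[bool]_n.

Lemma in_rowspace A v : reflect (exists S : {set 'I_n}, v = \bigcup_(i in S) brow A i) (v \in rowspace A).
Proof.
apply: (iffP imsetP) => [[S _ ->]|[S ->]]; first by exists S.
by exists S.
Qed.

Lemma row_in_genR A i : inMn A -> brow A i \in genR A.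
Proof.
case/andP=> /forallP Hr _.
rewrite inE; apply/andP; split.
  apply/in_rowspace; exists [set i]; by rewrite big_set1.
apply/andP; split.
  apply/set0Pn; case/existsP: (Hr i) => j Hj; exists j; by rewrite inE.
by apply/existsP; exists i.
Qed.

Lemma genRP A v : reflect [/\ v \in rowspace A, v != set0 & exists i, v \subset brow A i] (v \in genR A).
Proof.
rewrite inE; apply: (iffP andP) => [[H1 /andP[H2 /existsP H3]]|[H1 H2 /existsP H3]]; first by [].
by split => //; apply/andP.
Qed.

Lemma rowspace_mul G B : rowspace (bmul G B) \subset rowspace B.
Proof.
apply/subsetP => v /in_rowspace [S ->].
apply/in_rowspace; exists [set k | [exists i in S, G i k]].
apply/setP => j; apply/bigcupP/bigcupP.
- move=> [i iS]; rewrite inE /bmul mxE => /existsP [k /andP[Gik Bkj]].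
  exists k; last by rewrite inE.
  rewrite inE; apply/existsP; exists i; by rewrite iS.
- move=> [k]; rewrite inE => /existsP [i /andP[iS Gik]]; rewrite inE => Bkj.
  exists i => //; rewrite inE /bmul mxE; apply/existsP; exists k; by rewrite Gik.
Qed.

Lemma row_le D A i : inMn D -> exists k, brow A i \subset brow (bmul D A) k.
Proof.
case/andP=> _ /forallP Hc; case/existsP: (Hc i) => k Dki.
exists k; apply/subsetP => j; rewrite !inE /bmul mxE => Aij.
apply/existsP; exists i; by rewrite Dki.
Qed.

Lemma genR_sub A B G D : inMn D -> A = bmul G B -> B = bmul D A -> genR A \subset genR B.
Proof.
move=> HD eA eB; apply/subsetP => v /genRP [H1 H2 [i Hi]].
apply/genRP; split => //.
  rewrite eA in H1; exact: (subsetP (rowspace_mul G B)).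
have [k Hk] := row_le A i HD; exists k; rewrite eB; exact: subset_trans Hk.
Qed.

Lemma L_of_genR A B : inMn A -> inMn B -> genR A = genR B ->
  exists2 G : bmx n, inMn G & A = bmul G B.
Proof.
move=> HA HB E.
pose G : bmx n := (\matrix_(i < n, k < n) (brow B k \subset brow A i))%R.
have eq1 : A = bmul G B.
  apply/matrixP => i j; rewrite /bmul mxE.
  apply/idP/existsP.
  - move=> Aij; have := row_in_genR i HA; rewrite E => /genRP [/in_rowspace [S eS] _ _].
    have : j \in brow A i by rewrite inE.
    rewrite {1}eS => /bigcupP [k kS jk].
    exists k; rewrite mxE; apply/andP; split; last by rewrite inE in jk.
    rewrite eS; exact: (bigcup_sup k kS).
  - move=> [k]; rewrite mxE => /andP [/subsetP H Bkj].
    have : j \in brow A i by apply: H; rewrite inE.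
    by rewrite inE.
exists G => //.
apply/andP; split; apply/forallP.
- move=> i; case/andP: HA => /forallP Hr _; case/existsP: (Hr i) => j Aij.
  move: Aij; rewrite eq1 /bmul mxE => /existsP [k /andP [Gik _]]; by apply/existsP; exists k.
- move=> k; have := row_in_genR k HB; rewrite -E => /genRP [_ _ [i Hi]].
  apply/existsP; exists i; by rewrite mxE.
Qed.

Lemma partL A B : inMn A -> inMn B -> greenL A B <-> genR A = genR B.
Proof.
move=> HA HB; split.
  move=> [[G HG eA] [D HD eB]]; apply/eqP.
  by rewrite eqEsubset (genR_sub HD eA eB) (genR_sub HG eB eA).
move=> E; split; first exact: L_of_genR.
by apply: L_of_genR => //; rewrite E.
Qed.

Lemma inMn_tr A : inMn A -> inMn A^T.
Proof.
case/andP => /forallP H1 /forallP H2; apply/andP; split; apply/forallP => i.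
  case/existsP: (H2 i) => j H; apply/existsP; exists j; by rewrite mxE.
case/existsP: (H1 i) => j H; apply/existsP; exists j; by rewrite mxE.
Qed.

Lemma tr_bmul X Y : (bmul X Y)^T = bmul Y^T X^T.
Proof.
apply/matrixP => i j; rewrite /bmul !mxE; apply/existsP/existsP => [[k Hk]|[k Hk]];
  exists k; by rewrite !mxE andbC in Hk *.
Qed.

Lemma genC_tr A : genC A = genR A^T.
Proof.
have Ef : bcol A = brow A^T.
  apply: functional_extensionality => j; apply/setP => i; by rewrite !inE mxE.
by rewrite /genC /colspace /genR /rowspace Ef.
Qed.

Lemma greenR_tr A B : greenR A B <-> greenL A^T B^T.
Proof.
split.
  move=> [[G HG eA] [D HD eB]]; split.
    by exists G^T; [exact: inMn_tr | rewrite eA tr_bmul].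
  by exists D^T; [exact: inMn_tr | rewrite eB tr_bmul].
move=> [[G HG eA] [D HD eB]]; split.
  exists G^T; first exact: inMn_tr.
  by rewrite -(trmxK A) eA tr_bmul !trmxK.
exists D^T; first exact: inMn_tr.
by rewrite -(trmxK B) eB tr_bmul !trmxK.
Qed.

End S.

Theorem theorem4p2 (n : nat) (A B : bmx n) :
  inMn A -> inMn B ->
  [/\ greenL A B <-> genR A = genR B,
      greenR A B <-> genC A = genC B &
      greenH A B <-> (genR A = genR B /\ genC A = genC B)].
Proof.
move=> HA HB.
have h1 := partL HA HB.
have h2 : greenR A B <-> genC A = genC B.
  rewrite !genC_tr; have := greenR_tr A B; have := partL (inMn_tr HA) (inMn_tr HB); tauto.
split => //; rewrite /greenH; tauto.
Qed.
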